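(* Let $A$ be a wqo and $n\in\mathbb{N}$. Then $\mathbf{w}(A\times \Gamma_n) = \mathbf{w}(A)\otimes n$.
   Context: A wqo (well quasi-order) is a quasi-order with no infinite bad sequence, where a sequence $x_0,x_1,\dots$ is bad if there are no $i<j$ with $x_i\le x_j$. Two elements $x,y$ are incomparable ($x\perp y$) if neither $x\le y$ nor $y\le x$. For a wqo $A$, let $\mathrm{Inco}(A)$ be the set of nonempty finite sequences of pairwise incomparable elements of $A$, viewed as a (well-founded) forest where $s\frown y$ is a child of $s$. Its rank function is $r(s)=\sup\{r(t)+1: t \text{ a child of } s\}$ (so leaves have rank $0$), and the width is $\mathbf{w}(A)=\sup_{s\in \mathrm{Inco}(A)}(r(s)+1)$ (with $\mathbf{w}(\emptyset)=0$). $\Gamma_n$ denotes the antichain with $n$ elements. Cartesian products $A\times B$ carry the componentwise order. $\otimes$ denotes the natural (Hessenberg) product of ordinals. *)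

(* Defs.v *)
From Stdlib Require Import List Arith.
Import ListNotations.

Set Implicit Arguments.

(** * Ordinals as well-founded trees (Aczel / Brouwer style, arbitrary branching).
    [OSup I f] denotes the least ordinal strictly greater than every [f i],
    i.e. sup_i (f i + 1). *)
Inductive Ord : Type :=
| OSup : forall I : Type, (I -> Ord) -> Ord.
Arguments OSup : clear implicits.

(** [ole a b]: a <= b.  OSup I f <= OSup J g iff every f i is strictly below
    OSup J g, i.e. every f i <= some g j. *)
Fixpoint ole (a b : Ord) {struct a} : Prop :=
  match a, b with
  | OSup X f, OSup Y g => forall i, exists j, ole (f i) (g j)
  end.

Definition oeq (a b : Ord) : Prop := ole a b /\ ole b a.

Definition ozero : Ord := OSup Empty_set (fun e => match e with end).

(** Natural (Hessenberg) sum: a (+) b is the least ordinal strictly above all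
    a' (+) b (a' < a) and a (+) b' (b' < b). *)
Fixpoint osum (a : Ord) : Ord -> Ord :=
  fix osum_a (b : Ord) : Ord :=
    match a, b with
    | OSup X f, OSup Y g =>
        OSup (X + Y)%type
             (fun k => match k with
                       | inl i => osum (f i) (OSup Y g)
                       | inr j => osum_a (g j)
                       end)
    end.

Fixpoint onat_mul (a : Ord) (n : nat) : Ord :=
  match n with
  | 0 => ozero
  | S m => osum (onat_mul a m) a
  end.

Definition quasi_order (A : Type) (le : A -> A -> Prop) : Prop :=
  (forall x, le x x) /\ (forall x y z, le x y -> le y z -> le x z).

Definition wqo (A : Type) (le : A -> A -> Prop) : Prop :=
  quasi_order le /\
  (forall f : nat -> A, exists i j, i < j /\ le (f i) (f j)).

Definition incomp (A : Type) (le : A -> A -> Prop) (x y : A) : Prop :=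
  ~ le x y /\ ~ le y x.

Definition Inco (A : Type) (le : A -> A -> Prop) : Type :=
  { s : list A | s <> [] /\ ForallOrdPairs (incomp le) s }.

(** Rank in the forest Inco(A) (child of s: s ++ [y] with y incomparable to
    all entries of s):  r(s) = sup { r(t) + 1 : t child of s }.
    [HasRank le s a] : the rank of s exists and is (equivalent to) a. *)
Inductive HasRank (A : Type) (le : A -> A -> Prop) (s : list A) : Ord -> Prop :=
| HasRank_intro :
    forall g : { y : A | Forall (incomp le y) s } -> Ord,
      (forall y, HasRank le (s ++ [proj1_sig y]) (g y)) ->
      forall a, oeq a (OSup _ g) -> HasRank le s a.

(** Width: w(A) = sup_{s in Inco(A)} (r(s) + 1)  (= 0 if A is empty). *)
Definition HasWidth (A : Type) (le : A -> A -> Prop) (a : Ord) : Prop :=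
  exists g : Inco le -> Ord,
    (forall s, HasRank le (proj1_sig s) (g s)) /\ oeq a (OSup _ g).

Definition Gamma (n : nat) : Type := { i : nat | i < n }.
Definition Gamma_le (n : nat) (i j : Gamma n) : Prop := i = j.

Definition prod_le (A B : Type) (leA : A -> A -> Prop) (leB : B -> B -> Prop)
  (x y : A * B) : Prop := leA (fst x) (fst y) /\ leB (snd x) (snd y).

(* Main.v *)
Require Import Defs.
From Stdlib Require Import List Arith.
From Stdlib Require Import Classical ClassicalEpsilon ProofIrrelevance Lia.
Import ListNotations.

Lemma ole_refl : forall a, ole a a.
Proof. induction a as [X f IH]; simpl; intros i; exists i; apply IH. Qed.

Lemma ole_trans : forall a b c, ole a b -> ole b c -> ole a c.
Proof.
  induction a as [X f IH]; intros [Y g] [Z h]; simpl; intros H1 H2 i.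
  destruct (H1 i) as [j Hj]. destruct (H2 j) as [k Hk]. exists k. eapply IH; eauto.
Qed.

Lemma ole_sup : forall x Y (g : Y -> Ord) j, ole x (g j) -> ole x (OSup Y g).
Proof.
  induction x as [X h IH]; intros Y g j H. simpl. intros k.
  exists j. destruct (g j) as [Z q] eqn:E. simpl in H. destruct (H k) as [m Hm].
  apply (IH k Z q m). exact Hm.
Qed.

Lemma oeq_refl : forall a, oeq a a.
Proof. intros; split; apply ole_refl. Qed.
Lemma oeq_sym : forall a b, oeq a b -> oeq b a.
Proof. intros a b [H1 H2]; split; assumption. Qed.
Lemma oeq_trans : forall a b c, oeq a b -> oeq b c -> oeq a c.
Proof. intros a b c [H1 H2] [H3 H4]; split; eapply ole_trans; eauto. Qed.

Lemma osum_mono : forall a a' b b', ole a a' -> ole b b' -> ole (osum a b) (osum a' b').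
Proof.
  induction a as [X f IHa]; intros [X' f'] b.
  induction b as [Y g IHb]; intros [Y' g'] Ha Hb.
  simpl. intros [i|j].
  - simpl in Ha. destruct (Ha i) as [i' Hi]. exists (inl i'). apply IHa; [exact Hi| exact Hb].
  - simpl in Hb. destruct (Hb j) as [j' Hj]. exists (inr j'). apply IHb; [exact Ha | exact Hj].
Qed.

Lemma osum_oeq : forall a a' b b', oeq a a' -> oeq b b' -> oeq (osum a b) (osum a' b').
Proof. intros a a' b b' [H1 H2] [H3 H4]; split; apply osum_mono; auto. Qed.

Lemma onat_mul_oeq : forall a a' n, oeq a a' -> oeq (onat_mul a n) (onat_mul a' n).
Proof. intros a a' n H; induction n; simpl. apply oeq_refl. apply osum_oeq; auto. Qed.

Record Sys := mkSys { St : Type; Ch : St -> Type; chf : forall s, Ch s -> St }.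

Inductive Rk (X : Sys) (s : St X) : Ord -> Prop :=
| Rk_intro : forall g : Ch X s -> Ord, (forall c, Rk X (chf X s c) (g c)) ->
    forall a, oeq a (OSup _ g) -> Rk X s a.

Lemma bisim_eq (X Y : Sys) (R : St X -> St Y -> Prop)
  (H1 : forall s t, R s t -> forall c : Ch X s, exists d : Ch Y t, R (chf X s c) (chf Y t d))
  (H2 : forall s t, R s t -> forall d : Ch Y t, exists c : Ch X s, R (chf X s c) (chf Y t d)) :
  forall s a, Rk X s a -> forall t b, R s t -> Rk Y t b -> oeq a b.
Proof.
  intros s a H; induction H as [s g Hg IH a Ha]; intros t b HR Hb.
  destruct Hb as [g' Hg' b Hb].
  eapply oeq_trans; [exact Ha|]. eapply oeq_trans; [| apply oeq_sym; exact Hb].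
  split; simpl.
  - intros c. destruct (H1 _ _ HR c) as [d Hd]. exists d. apply (IH c _ _ Hd (Hg' d)).
  - intros d. destruct (H2 _ _ HR d) as [c Hc]. exists c. apply (IH c _ _ Hc (Hg' d)).
Qed.

Lemma bisim_ex (X Y : Sys) (R : St X -> St Y -> Prop)
  (H2 : forall s t, R s t -> forall d : Ch Y t, exists c : Ch X s, R (chf X s c) (chf Y t d)) :
  forall s a, Rk X s a -> forall t, R s t -> exists b, Rk Y t b.
Proof.
  intros s a H; induction H as [s g Hg IH a Ha]; intros t HR.
  assert (E : forall d, exists b, Rk Y (chf Y t d) b).
  { intros d. destruct (H2 _ _ HR d) as [c Hc]. eapply IH; eauto. }
  exists (OSup _ (fun d => proj1_sig (constructive_indefinite_description _ (E d)))).
  apply Rk_intro with (fun d => proj1_sig (constructive_indefinite_description _ (E d))).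
  - intros d. exact (proj2_sig (constructive_indefinite_description _ (E d))).
  - apply oeq_refl.
Qed.

Lemma Rk_unique (X : Sys) : forall s a, Rk X s a -> forall b, Rk X s b -> oeq a b.
Proof.
  intros s a H b Hb. apply (bisim_eq X X (@eq (St X))) with s s; auto.
  - intros s0 t E c; subst; exists c; reflexivity.
  - intros s0 t E c; subst; exists c; reflexivity.
Qed.

Lemma osum_unfold X (f : X -> Ord) Y (g : Y -> Ord) :
  osum (OSup X f) (OSup Y g) = OSup (X + Y) (fun k => match k with
     inl i => osum (f i) (OSup Y g) | inr j => osum (OSup X f) (g j) end).
Proof. reflexivity. Qed.

Definition prodSys (X Y : Sys) : Sys :=
  mkSys (St X * St Y) (fun s => (Ch X (fst s) + Ch Y (snd s))%type)
    (fun s c => match c with inl c1 => (chf X (fst s) c1, snd s)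
                        | inr c2 => (fst s, chf Y (snd s) c2) end).

Lemma prod_rank (X Y : Sys) : forall s1 a, Rk X s1 a -> forall s2 b, Rk Y s2 b ->
  Rk (prodSys X Y) (s1, s2) (osum a b).
Proof.
  intros s1 a H; induction H as [s1 g1 Hg1 IH1 a Ha].
  intros s2 b H; induction H as [s2 g2 Hg2 IH2 b Hb].
  apply Rk_intro with (g := fun c : Ch (prodSys X Y) (s1,s2) =>
     match c with inl c1 => osum (g1 c1) b | inr c2 => osum a (g2 c2) end).
  - intros [c1|c2]; simpl.
    + apply IH1. apply Rk_intro with g2; auto.
    + apply IH2.
  - eapply oeq_trans. apply osum_oeq; [exact Ha | exact Hb].
    rewrite osum_unfold. split; intros [c1|c2].
    + exists (inl c1). apply osum_mono. apply ole_refl. apply Hb.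
    + exists (inr c2). apply osum_mono. apply Ha. apply ole_refl.
    + exists (inl c1). apply osum_mono. apply ole_refl. apply Hb.
    + exists (inr c2). apply osum_mono. apply Ha. apply ole_refl.
Qed.

Definition nullSys : Sys := mkSys unit (fun _ => Empty_set) (fun s c => match c with end).

Definition LSys {A : Type} (le : A -> A -> Prop) : Sys :=
  mkSys (list A) (fun s => {y : A | Forall (incomp le y) s}) (fun s y => s ++ [proj1_sig y]).

Lemma HR_Rk {A : Type} (le : A -> A -> Prop) : forall s a, HasRank le s a -> Rk (LSys le) s a.
Proof.
  intros s a H; induction H as [s g Hg IH a Ha].
  apply Rk_intro with g; auto.
Qed.

Lemma Rk_HR {A : Type} (le : A -> A -> Prop) : forall s a, Rk (LSys le) s a -> HasRank le s a.
Proof.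
  intros s a H; induction H as [s g Hg IH a Ha].
  apply HasRank_intro with g; auto.
Qed.

Fixpoint Pn {A : Type} (le : A -> A -> Prop) (k : nat) : Sys :=
  match k with 0 => nullSys | S k => prodSys (Pn le k) (LSys le) end.

Fixpoint init {A : Type} (le : A -> A -> Prop) (k : nat) : St (Pn le k) :=
  match k with 0 => tt | S k => (init le k, @nil A) end.

Lemma Pn_rank {A : Type} (le : A -> A -> Prop) r0 : Rk (LSys le) [] r0 ->
  forall k, Rk (Pn le k) (init le k) (onat_mul r0 k).
Proof.
  intros H0 k; induction k.
  - apply Rk_intro with (fun c : Empty_set => match c with end).
    + intros [].
    + split; intros [].
  - simpl. apply prod_rank; auto.
Qed.

Lemma Pn_all {A : Type} (le : A -> A -> Prop) : (forall l, exists r, Rk (LSys le) l r) ->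
  forall k p, exists r, Rk (Pn le k) p r.
Proof.
  intros H k; induction k; intros p.
  - exists ozero. apply Rk_intro with (fun c : Empty_set => match c with end).
    + intros [].
    + split; intros [].
  - destruct p as [p l]. destruct (IHk p) as [r1 H1]. destruct (H l) as [r2 H2].
    exists (osum r1 r2). apply prod_rank; auto.
Qed.

Definition sel {A : Type} {n : nat} (i : nat) (s : list (A * Gamma n)) : list A :=
  map fst (filter (fun x => Nat.eqb (proj1_sig (snd x)) i) s).

Lemma sel_app {A : Type} {n : nat} i (s : list (A * Gamma n)) a g :
  sel i (s ++ [(a,g)]) = sel i s ++ (if Nat.eqb (proj1_sig g) i then [a] else []).
Proof.
  unfold sel. rewrite filter_app, map_app. simpl. destruct (Nat.eqb (proj1_sig g) i); reflexivity.
Qed.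

Lemma Fsel {A : Type} (le : A -> A -> Prop) {n : nat} a (g : Gamma n) : forall s,
  Forall (incomp (prod_le le (@Gamma_le n)) (a,g)) s <-> Forall (incomp le a) (sel (proj1_sig g) s).
Proof.
  induction s as [|[b h] s IH].
  - split; constructor.
  - unfold sel; simpl. fold (sel (proj1_sig g) s).
    rewrite Forall_cons_iff, IH.
    destruct (Nat.eqb (proj1_sig h) (proj1_sig g)) eqn:E.
    + apply Nat.eqb_eq in E. assert (h = g).
      { destruct h as [j Hj], g as [i Hi]; simpl in E; subst. f_equal. apply proof_irrelevance. }
      subst h. simpl. rewrite Forall_cons_iff.
      unfold incomp, prod_le, Gamma_le; simpl. intuition.
    + apply Nat.eqb_neq in E. unfold incomp, prod_le, Gamma_le; simpl.
      split; [intros [_ H]; exact H | intros H; split; [|exact H]].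
      split; intros [_ Heq]; apply E; subst; reflexivity.
Qed.

Fixpoint Rn {A : Type} (le : A -> A -> Prop) (n : nat) (k : nat) :
  list (A * Gamma n) -> St (Pn le k) -> Prop :=
  match k with
  | 0 => fun _ _ => True
  | S k => fun s p => Rn le n k s (fst p) /\ snd p = sel k s
  end.

Lemma Rn_U {A : Type} (le : A -> A -> Prop) (n : nat) : forall k s p a (g : Gamma n),
  Rn le n k s p -> k <= proj1_sig g -> Rn le n k (s ++ [(a,g)]) p.
Proof.
  induction k; simpl; auto.
  intros s [p l] a g [H1 H2] Hk; simpl in *. split.
  - apply IHk; auto; lia.
  - rewrite sel_app. destruct (Nat.eqb_spec (proj1_sig g) k); [lia|]. rewrite app_nil_r; auto.
Qed.

Lemma Rn_L {A : Type} (le : A -> A -> Prop) (n : nat) : forall k, k <= n -> forall s p,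
  Rn le n k s p ->
  (forall a (g : Gamma n), proj1_sig g < k -> Forall (incomp le a) (sel (proj1_sig g) s) ->
     exists c : Ch (Pn le k) p, Rn le n k (s ++ [(a,g)]) (chf _ p c)) /\
  (forall c : Ch (Pn le k) p, exists a (g : Gamma n), proj1_sig g < k /\
     Forall (incomp le a) (sel (proj1_sig g) s) /\ Rn le n k (s ++ [(a,g)]) (chf _ p c)).
Proof.
  induction k; intros Hk s p HR.
  - split. intros; lia. intros [].
  - destruct p as [p l]. destruct HR as [HR Hl]. simpl in HR, Hl.
    destruct (IHk ltac:(lia) s p HR) as [IHa IHb]. split.
    + intros a g Hg Hf. destruct (Nat.eq_dec (proj1_sig g) k) as [e|e].
      * assert (Hf' : Forall (incomp le a) l) by (rewrite Hl, <- e; exact Hf).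
        exists (inr (exist _ a Hf')). simpl. split.
        -- apply Rn_U; auto; lia.
        -- rewrite sel_app, Hl. destruct (Nat.eqb_spec (proj1_sig g) k); [reflexivity|lia].
      * destruct (IHa a g ltac:(lia) Hf) as [c Hc]. exists (inl c). simpl. split; auto.
        rewrite sel_app, Hl. destruct (Nat.eqb_spec (proj1_sig g) k); [lia|]. rewrite app_nil_r; auto.
    + intros [c|[y Hy]].
      * destruct (IHb c) as [a [g [Hg [Hf Hc]]]]. exists a, g. split; [lia|]. split; auto.
        simpl. split; auto.
        rewrite sel_app, Hl. destruct (Nat.eqb_spec (proj1_sig g) k); [lia|]. rewrite app_nil_r; auto.
      * assert (Hkn : k < n) by lia. exists y, (exist _ k Hkn : Gamma n). simpl. split; [lia|]. split.
        -- rewrite <- Hl. exact Hy.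
        -- split. apply Rn_U; auto.
           rewrite sel_app, Hl, Nat.eqb_refl. reflexivity.
Qed.

Lemma Rn_init {A : Type} (le : A -> A -> Prop) (n : nat) : forall k, Rn le n k [] (init le k).
Proof. induction k; simpl; auto. Qed.

Lemma Rn_ex {A : Type} (le : A -> A -> Prop) (n : nat) : forall k s, exists p, Rn le n k s p.
Proof.
  induction k; intros s. exists tt; simpl; auto.
  destruct (IHk s) as [p Hp]. exists (p, sel k s). simpl; auto.
Qed.

Lemma HR_unique {A : Type} (le : A -> A -> Prop) s a b :
  HasRank le s a -> HasRank le s b -> oeq a b.
Proof. intros H1 H2. eapply Rk_unique; [apply (HR_Rk le); exact H1 | apply (HR_Rk le); exact H2]. Qed.

Lemma child_le {A : Type} (le : A -> A -> Prop) s rm y rc :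
  HasRank le s rm -> Forall (incomp le y) s -> HasRank le (s ++ [y]) rc -> ole rc rm.
Proof.
  intros H Hy Hc. destruct H as [g Hg rm Hrm].
  pose proof (HR_unique le _ _ _ Hc (Hg (exist _ y Hy))) as [E _].
  eapply ole_trans; [exact E|]. eapply ole_trans; [|apply Hrm].
  apply ole_sup with (exist _ y Hy). apply ole_refl.
Qed.

Lemma FOP_snoc {A : Type} (R : A -> A -> Prop) : forall l y,
  ForallOrdPairs R (l ++ [y]) -> ForallOrdPairs R l /\ Forall (fun b => R b y) l.
Proof.
  induction l as [|a l IH]; intros y H.
  - split; constructor.
  - simpl in H. inversion H as [|a' l' Ha Hl]; subst.
    destruct (IH y Hl) as [H1 H2]. apply Forall_app in Ha as [Ha1 Ha2].
    inversion Ha2; subst. split; constructor; auto.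
Qed.

Lemma mono_prefix {A : Type} (le : A -> A -> Prop)
  (Ex : forall s, exists r, HasRank le s r) x : forall t r r',
  ForallOrdPairs (incomp le) (x :: t) -> HasRank le (x :: t) r -> HasRank le [x] r' -> ole r r'.
Proof.
  induction t as [|y t IH] using rev_ind; intros r r' HF H H'.
  - destruct (HR_unique le _ _ _ H H'); assumption.
  - change (x :: t ++ [y]) with ((x :: t) ++ [y]) in HF, H.
    apply FOP_snoc in HF as [HF1 HF2].
    destruct (Ex (x :: t)) as [rm Hm].
    eapply ole_trans; [eapply child_le; [exact Hm| |exact H] |].
    + eapply Forall_impl; [|exact HF2]. intros b [h1 h2]; split; assumption.
    + eapply IH; eauto.
Qed.

Lemma width_rank {A : Type} (le : A -> A -> Prop)
  (Ex : forall s, exists r, HasRank le s r) r0 :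
  HasRank le [] r0 -> forall a, HasWidth le a -> oeq a r0.
Proof.
  intros H0 a [g [Hg Ha]]. eapply oeq_trans; [exact Ha|].
  destruct H0 as [g0 Hg0 r0 Hr0]. eapply oeq_trans; [|apply oeq_sym; exact Hr0].
  split.
  - intros [s [Hne HF]]. destruct s as [|x t]; [congruence|].
    exists (exist _ x (Forall_nil _)).
    eapply mono_prefix; eauto. apply (Hg (exist _ (x :: t) (conj Hne HF))).
    apply (Hg0 (exist _ x (Forall_nil _))).
  - intros [y Hy].
    assert (Hs : [y] <> [] /\ ForallOrdPairs (incomp le) [y]).
    { split. discriminate. constructor; constructor. }
    exists (exist _ [y] Hs).
    destruct (HR_unique le _ _ _ (Hg0 (exist _ y Hy)) (Hg (exist _ [y] Hs))); assumption.
Qed.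

Lemma width_ex {A : Type} (le : A -> A -> Prop)
  (Ex : forall s, exists r, HasRank le s r) : exists a, HasWidth le a.
Proof.
  exists (OSup _ (fun s : Inco le => proj1_sig (constructive_indefinite_description _ (Ex (proj1_sig s))))).
  exists (fun s : Inco le => proj1_sig (constructive_indefinite_description _ (Ex (proj1_sig s)))).
  split. intros s. exact (proj2_sig (constructive_indefinite_description _ (Ex (proj1_sig s)))).
  apply oeq_refl.
Qed.

Fixpoint dcst {A : Type} (P : list A -> Prop) (R : A -> A -> Prop)
  (step : forall s, P s -> {y | Forall (R y) s /\ P (s ++ [y])})
  (s0 : list A) (H0 : P s0) (k : nat) : {s | P s} :=
  match k with
  | 0 => exist _ s0 H0
  | S k => let q := dcst P R step s0 H0 k in
      exist _ (proj1_sig q ++ [proj1_sig (step _ (proj2_sig q))])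
              (proj2 (proj2_sig (step _ (proj2_sig q))))
  end.

Definition dcf {A : Type} (P : list A -> Prop) (R : A -> A -> Prop)
  (step : forall s, P s -> {y | Forall (R y) s /\ P (s ++ [y])})
  (s0 : list A) (H0 : P s0) (k : nat) : A :=
  proj1_sig (step _ (proj2_sig (dcst P R step s0 H0 k))).

Lemma dc_prop {A : Type} (P : list A -> Prop) (R : A -> A -> Prop)
  (step : forall s, P s -> {y | Forall (R y) s /\ P (s ++ [y])}) s0 H0 :
  forall i j, i < j -> R (dcf P R step s0 H0 j) (dcf P R step s0 H0 i).
Proof.
  assert (Hin : forall j i, i < j -> In (dcf P R step s0 H0 i) (proj1_sig (dcst P R step s0 H0 j))).
  { induction j; intros i Hi; [lia|]. simpl. apply in_app_iff.
    destruct (Nat.eq_dec i j) as [->|ne]. right; left; reflexivity. left; apply IHj; lia. }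
  intros i j Hij.
  pose proof (proj1 (proj2_sig (step _ (proj2_sig (dcst P R step s0 H0 j))))) as HF.
  rewrite Forall_forall in HF. apply HF. apply Hin; auto.
Qed.

Lemma rank_exists {A : Type} (le : A -> A -> Prop) : wqo le -> forall s, exists r, HasRank le s r.
Proof.
  intros [_ Hw] s0. apply NNPP; intro H0.
  set (P := fun s => ~ exists r, HasRank le s r).
  assert (step : forall s, P s -> exists y, Forall (incomp le y) s /\ P (s ++ [y])).
  { intros s Hs. apply NNPP. intro Hn. apply Hs.
    assert (E : forall y : {y | Forall (incomp le y) s}, exists r, HasRank le (s ++ [proj1_sig y]) r).
    { intros [y Hy]. simpl. apply NNPP. intro Hr. apply Hn. exists y. split; assumption. }
    exists (OSup _ (fun y => proj1_sig (constructive_indefinite_description _ (E y)))).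
    econstructor. { intros y. exact (proj2_sig (constructive_indefinite_description _ (E y))). }
    apply oeq_refl. }
  assert (step' : forall s, P s -> {y | Forall (incomp le y) s /\ P (s ++ [y])}).
  { intros s Hs. apply constructive_indefinite_description. apply step, Hs. }
  destruct (Hw (dcf P (incomp le) step' s0 H0)) as [i [j [Hij Hle]]].
  destruct (dc_prop P (incomp le) step' s0 H0 i j Hij) as [_ Hn]. exact (Hn Hle).
Qed.

Theorem mainTheorem1 (A : Type) (le : A -> A -> Prop) (n : nat) (Hwqo : wqo le) :
  (exists a, HasWidth le a) /\
  (exists b, HasWidth (prod_le le (@Gamma_le n)) b) /\
  (forall a b, HasWidth le a -> HasWidth (prod_le le (@Gamma_le n)) b ->
     oeq b (onat_mul a n)).
Proof.
  pose proof (rank_exists le Hwqo) as ExA.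
  set (X := Pn le n). set (Y := LSys (prod_le le (@Gamma_le n))).
  set (R := fun (p : St X) (s : St Y) => Rn le n n s p).
  assert (H1 : forall p s, R p s -> forall c : Ch X p, exists d : Ch Y s, R (chf X p c) (chf Y s d)).
  { intros p s HR c. destruct (proj2 (Rn_L le n n (le_n n) s p HR) c) as [a [g [_ [Hf Hc]]]].
    exists (exist _ (a,g) (proj2 (Fsel le a g s) Hf)). exact Hc. }
  assert (H2 : forall p s, R p s -> forall d : Ch Y s, exists c : Ch X p, R (chf X p c) (chf Y s d)).
  { intros p s HR [[a g] Hd0]. pose proof (proj1 (Fsel le a g s) Hd0) as Hd.
    destruct (proj1 (Rn_L le n n (le_n n) s p HR) a g (proj2_sig g) Hd) as [c Hc].
    exists c. exact Hc. }
  assert (ExP : forall s, exists r, HasRank (prod_le le (@Gamma_le n)) s r).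
  { intros s. destruct (Rn_ex le n n s) as [p Hp].
    assert (ExL : forall l, exists r, Rk (LSys le) l r).
    { intros l. destruct (ExA l) as [r Hr]. exists r. apply HR_Rk; exact Hr. }
    destruct (Pn_all le ExL n p) as [r Hr].
    destruct (bisim_ex X Y R H2 p r Hr s Hp) as [b Hb]. exists b. apply Rk_HR; exact Hb. }
  split; [apply width_ex; exact ExA|]. split; [apply width_ex; exact ExP|].
  intros a b Ha Hb.
  destruct (ExA []) as [r0 Hr0]. destruct (ExP []) as [rP HrP].
  pose proof (width_rank le ExA r0 Hr0 a Ha) as Ea.
  pose proof (width_rank _ ExP rP HrP b Hb) as Eb.
  pose proof (bisim_eq X Y R H1 H2 _ _ (Pn_rank le r0 (HR_Rk le _ _ Hr0) n) [] rP
               (Rn_init le n n) (HR_Rk _ _ _ HrP)) as E.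
  eapply oeq_trans; [exact Eb|]. eapply oeq_trans; [apply oeq_sym; exact E|].
  apply onat_mul_oeq. apply oeq_sym; exact Ea.
Qed.
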